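(* A countably infinite graph $G$ is HE-homogeneous if and only if it is HH-homogeneous and the following two conditions hold: (1) $\mathcal{H}(G)\cap\overline{\mathcal{H}}(G)=\varnothing$; (2) $\mathcal{H}(G)$ is downward-closed in $(\mathrm{Age}(G),\preceq)$ (equivalently, $\overline{\mathcal{H}}(G)$ is upward-closed in $(\mathrm{Age}(G),\preceq)$).
   Context: All graphs are undirected and loopless; subgraphs are induced. A homomorphism maps adjacent vertices to adjacent vertices. $G$ is HH-homogeneous (resp. HE-homogeneous) if every homomorphism between finite induced subgraphs of $G$ is the restriction of an endomorphism (resp. surjective endomorphism) of $G$. $\mathrm{Age}(G)$ is the class of (isomorphism types of) finite graphs embeddable in $G$ as induced subgraphs. A co-cone over a finite $X\subseteq G$ is a vertex $v\in G\setminus X$ adjacent to no vertex of $X$. $\mathcal H(G)$ is the set of $A\in\mathrm{Age}(G)$ for which there is an embedding $e:A\to G$ such that $G$ contains a co-cone over $e[A]$; $\overline{\mathcal H}(G)$ is the set of $A\in\mathrm{Age}(G)$ for which there is an embedding $e:A\to G$ such that no vertex of $G\setminus e[A]$ is a co-cone over $e[A]$. For $A,B\in\mathrm{Age}(G)$, $A\preceq B$ means there is a surjective homomorphism $A\to B$. A subset $X$ is downward-closed if $x\in X$ and $y\preceq x$ imply $y\in X$, and upward-closed if $y\in X$ and $y\preceq x$ imply $x\in X$. *)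

(* Defs.v *)
From Stdlib Require Import List.
From mathcomp Require Import all_boot.
Set Implicit Arguments. Unset Strict Implicit. Unset Printing Implicit Defensive.

Definition simple_graph (V : Type) (E : V -> V -> Prop) : Prop :=
  (forall x y, E x y -> E y x) /\ (forall x, ~ E x x).

Definition surj (A B : Type) (f : A -> B) : Prop := forall b, exists a, f a = b.

Definition countably_infinite (V : Type) : Prop :=
  exists f : nat -> V, bijective f.

(* A homomorphism between finite induced subgraphs of G: a finite set X of
   vertices (given as a list) and a map h (only its values on X matter)
   sending adjacent vertices of X to adjacent vertices. The codomain induced
   subgraph can be taken to be the (finite) image of h. *)
Definition local_hom (V : Type) (E : V -> V -> Prop) (X : list V) (h : V -> V) :=
  forall x y, In x X -> In y X -> E x y -> E (h x) (h y).

Definition endomorphism (V : Type) (E : V -> V -> Prop) (F : V -> V) :=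
  forall x y, E x y -> E (F x) (F y).

Definition HH_homogeneous (V : Type) (E : V -> V -> Prop) : Prop :=
  forall (X : list V) (h : V -> V), local_hom E X h ->
    exists F : V -> V, endomorphism E F /\ (forall x, In x X -> F x = h x).

Definition HE_homogeneous (V : Type) (E : V -> V -> Prop) : Prop :=
  forall (X : list V) (h : V -> V), local_hom E X h ->
    exists F : V -> V, endomorphism E F /\ surj F /\
      (forall x, In x X -> F x = h x).

(* Finite graphs (representatives of isomorphism types) on 'I_n. *)
Record fin_graph : Type := FGraph { fg_n : nat; fg_adj : 'I_fg_n -> 'I_fg_n -> bool }.
Arguments fg_adj f _ _ : clear implicits.

Definition embedding (V : Type) (E : V -> V -> Prop) (A : fin_graph)
  (e : 'I_(fg_n A) -> V) : Prop :=
  injective e /\ (forall i j, fg_adj A i j <-> E (e i) (e j)).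

Arguments embedding [V] E A e.

Definition in_Age (V : Type) (E : V -> V -> Prop) (A : fin_graph) : Prop :=
  exists e, embedding E A e.

Definition cocone (V : Type) (E : V -> V -> Prop) (A : fin_graph)
  (e : 'I_(fg_n A) -> V) (v : V) : Prop :=
  (forall i, v <> e i) /\ (forall i, ~ E v (e i)).

Definition in_H (V : Type) (E : V -> V -> Prop) (A : fin_graph) : Prop :=
  in_Age E A /\ exists e, embedding E A e /\ exists v, cocone E e v.

Definition in_Hbar (V : Type) (E : V -> V -> Prop) (A : fin_graph) : Prop :=
  in_Age E A /\ exists e, embedding E A e /\ forall v, ~ cocone E e v.

Definition fg_hom (A B : fin_graph) (f : 'I_(fg_n A) -> 'I_(fg_n B)) : Prop :=
  forall i j, fg_adj A i j -> fg_adj B (f i) (f j).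

Definition fg_preceq (A B : fin_graph) : Prop :=
  exists f : 'I_(fg_n A) -> 'I_(fg_n B), fg_hom f /\ surj f.

Definition downward_closed_in_Age (V : Type) (E : V -> V -> Prop)
  (P : fin_graph -> Prop) : Prop :=
  forall A B, in_Age E A -> in_Age E B -> P A -> fg_preceq B A -> P B.

(* Main.v *)
Require Import Defs.
From Stdlib Require Import List.
From mathcomp Require Import all_boot.
From Stdlib Require Import Classical ClassicalEpsilon Lia.
Set Implicit Arguments. Unset Strict Implicit. Unset Printing Implicit Defensive.

Definition decP (P : Prop) : bool :=
  if excluded_middle_informative P then true else false.

Lemma decPP (P : Prop) : decP P = true <-> P.
Proof.
  unfold decP; destruct (excluded_middle_informative P) as [h|h]; split => H //.
Qed.

Definition vdec (V : Type) : forall x y : V, {x = y} + {x <> y} :=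
  fun x y => excluded_middle_informative (x = y).

Definition fg_of (V : Type) (E : V -> V -> Prop) (v0 : V) (L : list V) : fin_graph :=
  @FGraph (List.length L) (fun i j => decP (E (List.nth i L v0) (List.nth j L v0))).

Definition emb_of (V : Type) (v0 : V) (L : list V) : 'I_(List.length L) -> V :=
  fun i => List.nth i L v0.

Arguments emb_of [V] v0 L _.
Arguments fg_of [V] E v0 L.

Lemma ord_lt n (i : 'I_n) : (nat_of_ord i < n)%coq_nat.
Proof. apply/ltP; exact: ltn_ord. Qed.

Lemma emb_ok (V : Type) (E : V -> V -> Prop) (v0 : V) (L : list V) :
  NoDup L -> embedding E (fg_of E v0 L) (emb_of v0 L).
Proof.
  move=> HL; split.
  - move=> i j Hij. apply: val_inj => /=.
    apply (proj1 (NoDup_nth L v0) HL); try apply ord_lt; exact Hij.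
  - move=> i j /=. exact: decPP.
Qed.

Lemma KL (V : Type) (E : V -> V -> Prop) (HG : simple_graph E)
  (H1 : forall A : fin_graph, ~ (in_H E A /\ in_Hbar E A))
  (H2 : downward_closed_in_Age E (in_H E))
  (S : list V) (q : V -> V) (Hq : local_hom E S q) (w : V)
  (Hw : forall s, In s S -> w <> q s /\ ~ E w (q s)) :
  exists x, forall s, In s S -> x <> s /\ ~ E x s.
Proof.
  apply NNPP => Hno.
  set S' := nodup (@vdec V) S.
  set T := nodup (@vdec V) (List.map q S').
  have NS : NoDup S' by apply NoDup_nodup.
  have NT : NoDup T by apply NoDup_nodup.
  have eA := emb_ok E w NS.
  have eC := emb_ok E w NT.
  have HC : in_H E (fg_of E w T).
    split; first by exists (emb_of w T).
    exists (emb_of w T); split => //; exists w.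
    suff Hc : forall i : 'I_(List.length T), w <> emb_of w T i /\ ~ E w (emb_of w T i).
      by split => i; apply Hc.
    move=> i; rewrite /emb_of.
    have Hi : In (List.nth i T w) T by apply nth_In, ord_lt.
    move: Hi; rewrite /T nodup_In in_map_iff => -[s [Hs1 Hs2]].
    rewrite /S' nodup_In in Hs2. rewrite -Hs1. exact: (Hw s Hs2).
  have Hex : forall i : 'I_(List.length S'), exists j : 'I_(List.length T),
      List.nth j T w = q (List.nth i S' w).
    move=> i.
    have : In (q (List.nth i S' w)) T.
      rewrite /T nodup_In; apply in_map, nth_In, ord_lt.
    move=> /(In_nth _ _ w) [j [Hj1 Hj2]].
    exists (Ordinal (introT ltP Hj1)); exact Hj2.
  have HP : fg_preceq (fg_of E w S') (fg_of E w T).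
    exists (fun i => proj1_sig (constructive_indefinite_description _ (Hex i))).
    split.
    - move=> i j /= /decPP Hij; apply/decPP.
      rewrite (proj2_sig (constructive_indefinite_description _ (Hex i))).
      rewrite (proj2_sig (constructive_indefinite_description _ (Hex j))).
      apply Hq => //; rewrite -(nodup_In (@vdec V)); apply nth_In, ord_lt.
    - move=> b.
      have : In (List.nth b T w) T by apply nth_In, ord_lt.
      rewrite {2}/T nodup_In in_map_iff => -[s [Hs1 Hs2]].
      move: Hs2 => /(In_nth _ _ w) [i [Hi1 Hi2]].
      exists (Ordinal (introT ltP Hi1)).
      set j := proj1_sig _.
      have Hj := proj2_sig (constructive_indefinite_description _ (Hex (Ordinal (introT ltP Hi1)))).
      fold j in Hj. simpl in Hj. rewrite Hi2 Hs1 in Hj.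
      apply: val_inj => /=.
      apply (proj1 (NoDup_nth T w) NT); try apply ord_lt; exact Hj.
  have HA : in_H E (fg_of E w S').
    apply: (H2 _ _ _ _ HC HP); [by exists (emb_of w T) | by exists (emb_of w S')].
  apply: (H1 (fg_of E w S')); split => //.
  split; first by exists (emb_of w S').
  exists (emb_of w S'); split => // v [Hv1 Hv2].
  apply Hno; exists v => s Hs.
  have : In s S' by rewrite /S' nodup_In.
  move=> /(In_nth _ _ w) [i [Hi1 Hi2]].
  have := Hv1 (Ordinal (introT ltP Hi1)); have := Hv2 (Ordinal (introT ltP Hi1)).
  rewrite /emb_of /= Hi2; tauto.
Qed.

Lemma fresh (V : Type) (Hcount : countably_infinite V) (L : list V) :
  exists x, ~ In x L.
Proof.
  case: Hcount => f [g fK gK].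
  exists (f (S (list_max (List.map g L)))) => H.
  have : In (g (f (S (list_max (List.map g L))))) (List.map g L) by apply in_map.
  rewrite fK => Hin.
  have := proj1 (list_max_le (List.map g L) (list_max (List.map g L))) (le_n _).
  rewrite Forall_forall => /(_ _ Hin). lia.
Qed.

Lemma mem_In (T : eqType) (x : T) (s : seq T) : x \in s -> List.In x s.
Proof.
  elim: s => //= y s IH; rewrite in_cons => /orP [/eqP->|H]; [left|right; apply IH] => //.
Qed.

Definition transfer (V : Type) (n : nat) (e2 g : 'I_n -> V) (z : V) : V :=
  match excluded_middle_informative (exists i, e2 i = z) with
  | left H => g (proj1_sig (constructive_indefinite_description _ H))
  | right _ => z
  end.

Lemma transfer_spec (V : Type) n (e2 g : 'I_n -> V) : injective e2 ->
  forall i, transfer e2 g (e2 i) = g i.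
Proof.
  move=> inj i; rewrite /transfer.
  case: excluded_middle_informative => [H|H]; last by exfalso; apply H; exists i.
  by rewrite (inj _ _ (proj2_sig (constructive_indefinite_description _ H))).
Qed.

Lemma fwd_core (V : Type) (E : V -> V -> Prop) (HE : HE_homogeneous E)
  (B : fin_graph) (eB : 'I_(fg_n B) -> V) (Hemb : embedding E B eB)
  (g : 'I_(fg_n B) -> V) (Hg : forall i j, fg_adj B i j -> E (g i) (g j))
  (v : V) (Hv : forall i, v <> g i /\ ~ E v (g i)) :
  exists w, cocone E eB w.
Proof.
  case: Hemb => inj Hadj.
  set X := List.map eB (enum 'I_(fg_n B)).
  have HX : forall x, In x X -> exists i, x = eB i.
    move=> x; rewrite /X in_map_iff => -[i [<- _]]; by exists i.
  have Hlh : local_hom E X (transfer eB g).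
    move=> x y /HX [i ->] /HX [j ->] Hxy.
    rewrite !transfer_spec //; apply Hg, Hadj, Hxy.
  case: (HE X _ Hlh) => F [HF [Hs Hext]].
  case: (Hs v) => w Hw.
  have Hin : forall i, In (eB i) X.
    move=> i; rewrite /X; apply in_map, mem_In; by rewrite mem_enum.
  exists w; split => i.
  - move=> Heq; apply (proj1 (Hv i)).
    by rewrite -Hw Heq Hext // transfer_spec.
  - move=> Hwi; apply (proj2 (Hv i)).
    have := HF _ _ Hwi. by rewrite Hw Hext // transfer_spec.
Qed.

Lemma forward (V : Type) (E : V -> V -> Prop) (HE : HE_homogeneous E) :
  HH_homogeneous E /\
   (forall A : fin_graph, ~ (in_H E A /\ in_Hbar E A)) /\
   downward_closed_in_Age E (in_H E).
Proof.
  split; [|split].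
  - move=> X h Hh; case: (HE X h Hh) => F [HF [_ HX]]; by exists F.
  - move=> A [[_ [e1 [He1 [v Hv]]]] [_ [e2 [He2 Hno]]]].
    have [w Hw] := fwd_core HE He2 (g := e1) (fun i j => proj1 (proj2 He1 i j)) (v := v)
      (fun i => conj (proj1 Hv i) (proj2 Hv i)).
    exact: Hno Hw.
  - move=> A B _ [eB HeB] [_ [eA [HeA [v Hv]]]] [f [Hf _]].
    split; first by exists eB.
    exists eB; split => //.
    apply: (@fwd_core V E HE B eB HeB (fun i => eA (f i)) _ v).
    + move=> i j Hij; apply (proj1 (proj2 HeA _ _)), Hf, Hij.
    + move=> i; exact (conj (proj1 Hv (f i)) (proj2 Hv (f i))).
Qed.

Definition ext (V : Type) (D : list V) (p : V -> V) (D' : list V) (p' : V -> V) :=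
  (forall x, In x D -> In x D') /\ (forall x, In x D -> p' x = p x).

Lemma forth (V : Type) (E : V -> V -> Prop) (HH : HH_homogeneous E)
  (D : list V) (p : V -> V) (Hp : local_hom E D p) (v : V) :
  exists D' p', local_hom E D' p' /\ ext D p D' p' /\ In v D'.
Proof.
  case: (HH D p Hp) => F [HF HD].
  exists (v :: D), F; split; [|split].
  - move=> x y _ _; apply HF.
  - split => x Hx; [right|apply HD] => //.
  - by left.
Qed.

Lemma back (V : Type) (E : V -> V -> Prop) (HG : simple_graph E)
  (Hcount : countably_infinite V)
  (H1 : forall A : fin_graph, ~ (in_H E A /\ in_Hbar E A))
  (H2 : downward_closed_in_Age E (in_H E))
  (D : list V) (p : V -> V) (Hp : local_hom E D p) (y : V) :
  exists D' p', local_hom E D' p' /\ ext D p D' p' /\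
    exists x, In x D' /\ p' x = y.
Proof.
  case: HG => Hsym Hirr.
  case: (classic (exists x, In x D /\ p x = y)) => [Hy|Hy].
    exists D, p; split => //; split => //.
  suff [x [HxD Hx]] : exists x, ~ In x D /\ forall d, In d D -> E x d -> E y (p d).
    exists (x :: D), (fun z => if excluded_middle_informative (z = x) then y else p z).
    split; [|split].
    - move=> a b Ha Hb Hab.
      case: excluded_middle_informative => Ea; case: excluded_middle_informative => Eb.
      + subst; by case: (Hirr x).
      + subst; apply Hx => //; case: Hb => // Hb; by case: Eb.
      + subst; apply Hsym, Hx; last by apply Hsym.
        case: Ha => // Ha; by case: Ea.
      + apply Hp => //; [case: Ha|case: Hb] => // H; subst; [case: Ea|case: Eb] => //.
    - split => z Hz; first by right.
      case: excluded_middle_informative => // Ez; subst; by case: HxD.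
    - exists x; split; first by left.
      by case: excluded_middle_informative.
  case: (classic (exists d0, In d0 D /\ ~ E y (p d0))) => [[d0 [Hd0 Hnd0]]|Hall]; last first.
    case: (fresh Hcount D) => x Hx; exists x; split => // d Hd _.
    apply NNPP => H; apply Hall; by exists d.
  apply NNPP => Hno.
  set B := List.filter (fun d => ~~ decP (E y (p d))) D.
  have HB : forall b, In b B <-> In b D /\ ~ E y (p b).
    move=> b; rewrite /B filter_In; split => -[H1' H2']; split => //.
    + by move=> /decPP H; rewrite H in H2'.
    + by apply/negP => /decPP.
  set Inv := fun L : list V => NoDup L /\ incl L D /\
    forall l s, In l L -> In s B \/ In s L -> ~ E l s.
  have Hk : forall k, exists L, Inv L /\ List.length L = k.
    elim => [|k [L [[ND [Inc HI]] Hlen]]].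
      exists nil; split => //; split; first by constructor.
      by split.
    set q := fun z => if excluded_middle_informative (In z L) then p d0 else p z.
    have Hq : local_hom E (B ++ L) q.
      move=> a b; rewrite !in_app_iff => Ha Hb Hab.
      case: (classic (In a L)) => HaL.
        by case: (HI a b HaL Hb).
      case: (classic (In b L)) => HbL.
        by case: (HI b a HbL Ha); apply Hsym.
      rewrite /q; case: excluded_middle_informative => E1; first by case: HaL.
      case: excluded_middle_informative => E2; first by case: HbL.
      have HaD : In a D by case: Ha => H; [case/HB: H|case: HaL].
      have HbD : In b D by case: Hb => H; [case/HB: H|case: HbL].
      exact: Hp HaD HbD Hab.
    have Hw : forall s, In s (B ++ L) -> y <> q s /\ ~ E y (q s).
      move=> s; rewrite in_app_iff /q => Hs.
      case: excluded_middle_informative => HsL.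
        split => //; move=> Heq; apply Hy; by exists d0.
      have [HsD HsE] : In s D /\ ~ E y (p s) by apply/HB; case: Hs.
      split => // Heq; apply Hy; by exists s.
    have [x Hx] := KL (conj Hsym Hirr) H1 H2 Hq Hw.
    case: (classic (In x D)) => HxD; last first.
      exfalso; apply Hno; exists x; split => // d Hd Hxd.
      apply NNPP => Hnd.
      have : In d (B ++ L) by apply in_app_iff; left; apply/HB.
      by move=> /Hx [_ []].
    exists (x :: L); split; last by rewrite /= Hlen.
    split; [|split].
    - constructor => // H; have : In x (B ++ L) by apply in_app_iff; right.
      by move=> /Hx [].
    - move=> z [<-|Hz] //; by apply Inc.
    - move=> l s [<-|Hl] Hs.
      + case: Hs => [Hs|[<-|Hs]]; [|by apply Hirr|];
        have := Hx s; rewrite in_app_iff; tauto.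
      + case: Hs => [Hs|[<-|Hs]]; [apply HI; tauto| |apply HI; tauto].
        move=> H; apply Hsym in H; have := Hx l; rewrite in_app_iff; tauto.
  have [L [[ND [Inc _]] Hlen]] := Hk (S (List.length D)).
  have := NoDup_incl_length ND Inc. lia.
Qed.

Lemma ext_trans (V : Type) D1 p1 D2 p2 D3 p3 :
  @ext V D1 p1 D2 p2 -> ext D2 p2 D3 p3 -> ext D1 p1 D3 p3.
Proof.
  move=> [i1 a1] [i2 a2]; split => x Hx; first by auto.
  by rewrite a2 ?a1 //; auto.
Qed.

Definition State (V : Type) (E : V -> V -> Prop) :=
  {s : list V * (V -> V) | local_hom E (fst s) (snd s)}.

Lemma step_ex (V : Type) (E : V -> V -> Prop) (HG : simple_graph E)
  (Hcount : countably_infinite V) (HH : HH_homogeneous E)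
  (H1 : forall A : fin_graph, ~ (in_H E A /\ in_Hbar E A))
  (H2 : downward_closed_in_Age E (in_H E))
  (s : {s : list V * (V -> V) | local_hom E (fst s) (snd s)}) (v : V) :
  exists s' : {s : list V * (V -> V) | local_hom E (fst s) (snd s)},
    ext (fst (proj1_sig s)) (snd (proj1_sig s)) (fst (proj1_sig s')) (snd (proj1_sig s'))
    /\ In v (fst (proj1_sig s')) /\
    exists x, In x (fst (proj1_sig s')) /\ snd (proj1_sig s') x = v.
Proof.
  case: s => [[D p] Hp] /=.
  have [D1 [p1 [Hp1 [He1 Hv1]]]] := forth HH Hp v.
  have [D2 [p2 [Hp2 [He2 Hv2]]]] := back HG Hcount H1 H2 Hp1 v.
  exists (exist _ (D2, p2) Hp2) => /=; split; last split => //.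
  - exact: ext_trans He1 He2.
  - by apply He2.
Qed.

Lemma backward (V : Type) (E : V -> V -> Prop) (HG : simple_graph E)
  (Hcount : countably_infinite V) (HH : HH_homogeneous E)
  (H1 : forall A : fin_graph, ~ (in_H E A /\ in_Hbar E A))
  (H2 : downward_closed_in_Age E (in_H E)) : HE_homogeneous E.
Proof.
  move=> X h Hh.
  pose St := State E.
  pose stp (s : St) (v : V) := constructive_indefinite_description _ (step_ex HG Hcount HH H1 H2 s v).
  have [f [g fK gK]] := Hcount.
  pose s0 : St := exist _ (X, h) Hh.
  pose seqs := fix seqs (n : nat) : St :=
    match n with O => s0 | S m => proj1_sig (stp (seqs m) (f m)) end.
  pose Dn n := fst (proj1_sig (seqs n)).
  pose pn n := snd (proj1_sig (seqs n)).
  have Hstep : forall n, ext (Dn n) (pn n) (Dn (S n)) (pn (S n)) /\ In (f n) (Dn (S n)) /\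
      exists x, In x (Dn (S n)) /\ pn (S n) x = f n.
    move=> n; exact: (proj2_sig (stp (seqs n) (f n))).
  have Hmono : forall m n, (m <= n)%coq_nat -> ext (Dn m) (pn m) (Dn n) (pn n).
    move=> m n; elim => [|k _ IH]; first by split.
    exact: ext_trans IH (proj1 (Hstep k)).
  have Hagree : forall m n x, In x (Dn m) -> In x (Dn n) -> pn m x = pn n x.
    move=> m n x Hm Hn; case: (PeanoNat.Nat.le_ge_cases m n) => H.
      by rewrite (proj2 (Hmono _ _ H) x Hm).
      by rewrite (proj2 (Hmono _ _ H) x Hn).
  have Hloc : forall n, local_hom E (Dn n) (pn n).
    move=> n; exact: (proj2_sig (seqs n)).
  have HinS : forall x, In x (Dn (S (g x))).
    move=> x; have := proj1 (proj2 (Hstep (g x))); by rewrite gK.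
  exists (fun x => pn (S (g x)) x); split; [|split].
  - move=> x y Hxy.
    set n := PeanoNat.Nat.max (S (g x)) (S (g y)).
    have Hx : In x (Dn n) by apply (proj1 (Hmono _ _ (PeanoNat.Nat.le_max_l _ _))), HinS.
    have Hy : In y (Dn n) by apply (proj1 (Hmono _ _ (PeanoNat.Nat.le_max_r _ _))), HinS.
    rewrite (Hagree _ n x (HinS x) Hx) (Hagree _ n y (HinS y) Hy).
    exact: Hloc.
  - move=> b; have [x [Hx Hxb]] := proj2 (proj2 (Hstep (g b))).
    exists x; rewrite (Hagree _ _ x (HinS x) Hx) Hxb; by rewrite gK.
  - move=> x Hx.
    have H0 : In x (Dn 0) by [].
    by rewrite (Hagree _ 0 x (HinS x) H0).
Qed.

Theorem proposition5p8 (V : Type) (E : V -> V -> Prop)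
  (HG : simple_graph E) (Hcount : countably_infinite V) :
  HE_homogeneous E <->
  (HH_homogeneous E /\
   (forall A : fin_graph, ~ (in_H E A /\ in_Hbar E A)) /\
   downward_closed_in_Age E (in_H E)).
Proof.
  split; first exact: forward.
  move=> [HH [H1 H2]]; exact: backward.
Qed.
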